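(* Let $p$ be a prime, let $V:=\{v_F: F\subseteq[4p],\ |F|=2p\}\subseteq\{0,1\}^{4p}\subseteq\mathbb{F}_p^{4p}$, let $C\subseteq[4p]$ with $|C|=3p$, and put $Q:=V\cup\{v_C\}$. If $y\in\mathrm{Sm}(\prec_{deg},Q)\setminus\mathrm{Sm}(\prec_{deg},V)$, then $\deg y\ge p$.
   Context: $[m]=\{1,\dots,m\}$; $v_F\in\{0,1\}^{4p}$ is the characteristic vector of $F$. Polynomials are in $\mathbb{F}_p[x_1,\ldots,x_{4p}]$. $\prec_{deg}$ is the deglex order (compare degrees first, ties broken lexicographically with $x_{4p}\prec\cdots\prec x_1$). $\mathrm{Sm}(\prec,X)$ is the set of monomials that are not the $\prec$-leading monomial of any nonzero polynomial over $\mathbb{F}_p$ vanishing on $X$. *)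

(* Defs.v *)
From HB Require Import structures.
From mathcomp Require Import all_boot all_order all_algebra.
Set Implicit Arguments. Unset Strict Implicit. Unset Printing Implicit Defensive.
Import GRing.Theory.
Local Open Scope ring_scope.

(* Monomials in the variables x_1, ..., x_n: exponent vectors.
   Index i : 'I_n corresponds to the variable x_(i+1). *)
Definition monomial (n : nat) := {ffun 'I_n -> nat}.

Definition mdeg n (m : monomial n) : nat := (\sum_(i < n) m i)%N.

(* Lexicographic order with x_n < ... < x_1: compare exponents of x_1 first. *)
Definition lex_lt n (m m' : monomial n) : bool :=
  [exists i : 'I_n, (m i < m' i)%N && [forall j : 'I_n, (j < i)%N ==> (m j == m' j)]].

Definition deglex_lt n (m m' : monomial n) : bool :=
  (mdeg m < mdeg m')%N || ((mdeg m == mdeg m') && lex_lt m m').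

(* A polynomial in F[x_1..x_n] represented as a formal finite sum of terms
   (coefficient, monomial); the polynomial itself is given by [coef]. *)
Definition mpoly (F : fieldType) (n : nat) := seq (F * monomial n).

Definition coef (F : fieldType) n (P : mpoly F n) (m : monomial n) : F :=
  \sum_(t <- P | t.2 == m) t.1.

Definition meval (F : fieldType) n (P : mpoly F n) (x : 'I_n -> F) : F :=
  \sum_(t <- P) t.1 * \prod_(i < n) x i ^+ t.2 i.

Definition is_lead_deglex (F : fieldType) n (P : mpoly F n) (m : monomial n) : Prop :=
  coef P m != 0 /\ forall m', coef P m' != 0 -> m' = m \/ deglex_lt m' m.

Definition Sm_deglex (F : finFieldType) n (X : {set {ffun 'I_n -> F}}) (m : monomial n) : Prop :=
  ~ exists P : mpoly F n, is_lead_deglex P m /\ forall x, x \in X -> meval P x = 0.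

Definition charvec (F : fieldType) n (A : {set 'I_n}) : {ffun 'I_n -> F} :=
  [ffun i => (i \in A)%:R].

(* Main.v *)
Require Import Defs.
From mathcomp Require Import all_boot all_order all_algebra.
Set Implicit Arguments. Unset Strict Implicit. Unset Printing Implicit Defensive.
Import GRing.Theory.
Local Open Scope ring_scope.

Lemma binp_Fp (p r : nat) : prime p -> (r < p)%N -> ('C(p + r, p))%:R = 1 :> 'F_p.
Proof.
move=> hp hr.
rewrite -binomial.Vandermonde natr_sum big_ord_recr /= subnn bin0 binn muln1.
have [p' ep] : exists p', p = p'.+1 by case: p hp {hr} => // p' _; exists p'.
move: hp hr; rewrite ep => hp hr.
rewrite big_ord_recl /= (bin_small hr) muln0 add0r.
rewrite big1 ?add0r // => i _.
have hi : (0 < bump 0 i < p'.+1)%N.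
  by rewrite /bump /= add1n ltnS (ltn_ord i).
have /dvdnP [q ->] := prime_dvd_bin hp hi.
by rewrite !natrM (pchar_Fp_0 hp) mulr0 mul0r.
Qed.

Definition supp n (m : monomial n) : {set 'I_n} := [set i | m i != 0%N].

Lemma mono_charvec (F : fieldType) n (m : monomial n) (A : {set 'I_n}) :
  \prod_(i < n) (charvec F A) i ^+ m i = (supp m \subset A)%:R.
Proof.
case: (boolP (supp m \subset A)) => hs.
  rewrite big1 // => i _; rewrite /charvec ffunE.
  case: (boolP (m i == 0%N)) => [/eqP -> //|hi].
  by rewrite (subsetP hs) ?inE // expr1n.
have [i hi hiA] : exists2 i, i \in supp m & i \notin A.
  exact/subsetPn.
rewrite (bigD1 i) //= /charvec ffunE (negbTE hiA) expr0n.
rewrite inE in hi; by rewrite (negbTE hi) mul0r.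
Qed.

Lemma card_supp n (m : monomial n) : (#|supp m| <= mdeg m)%N.
Proof.
rewrite /mdeg -sum1_card.
rewrite [X in (_ <= X)%N](bigID (fun i => i \in supp m)) /=.
apply: leq_trans (leq_addr _ _); apply: leq_sum => i; rewrite inE lt0n //.
Qed.

Lemma coef0_meval (F : fieldType) n (Q : mpoly F n) :
  (forall m, coef Q m = 0) -> forall x, meval Q x = 0.
Proof.
move=> + x; elim: {Q} (size Q) {-2}Q (leqnn (size Q)) => [|k IH] Q hk hc.
  by move: hk; rewrite leqn0 => /nilP ->; rewrite /meval big_nil.
case: Q hk hc => [|t Q'] hk hc; first by rewrite /meval big_nil.
set m0 := t.2.
have -> : meval (t :: Q') x =
   meval [seq u <- t :: Q' | u.2 == m0] x + meval [seq u <- t :: Q' | u.2 != m0] x.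
  by rewrite /meval !big_filter [in LHS](bigID (fun u => u.2 == m0)).
have -> : meval [seq u <- t :: Q' | u.2 == m0] x = 0.
  rewrite /meval big_filter.
  rewrite (eq_bigr (fun u => u.1 * \prod_(i < n) x i ^+ m0 i)); last first.
    by move=> u /eqP ->.
  by rewrite -mulr_suml -/(coef (t :: Q') m0) hc mul0r.
rewrite add0r IH //.
  rewrite size_filter /=; have -> : (t.2 != m0) = false by rewrite eqxx.
  by rewrite add0n; apply: leq_trans (count_size _ _) _; rewrite -ltnS.
move=> m; rewrite /coef big_filter_cond.
case: (eqVneq m m0) => [->|hm].
  by rewrite big1 // => u /andP [/negbTE ->].
rewrite -[RHS](hc m) /coef.
apply: eq_bigl => u; case: (eqVneq u.2 m) => [->|]; by rewrite ?hm ?andbF ?andbT.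
Qed.

From mathcomp Require Import zify.

Lemma count_id (p : nat) (hp : prime p) n (C Y S : {set 'I_n}) :
  Y \subset C -> #|Y| = (p + p.-1)%N -> (#|S| < p)%N ->
  \sum_(T in [set T : {set 'I_n} | T \subset Y & #|T| == p])
     ((S \subset C :\: T)%:R : 'F_p) = (S \subset C)%:R.
Proof.
move=> hYC hY hS.
case: (boolP (S \subset C)) => hSC; last first.
  rewrite big1 // => T _; rewrite subsetD (negbTE hSC) //.
have -> : \sum_(T in [set T : {set 'I_n} | T \subset Y & #|T| == p])
     ((S \subset C :\: T)%:R : 'F_p) =
   \sum_(T in [set T : {set 'I_n} | T \subset Y :\: S & #|T| == p]) 1.
  rewrite big_mkcond [RHS]big_mkcond; apply: eq_bigr => T _.
  rewrite !inE subsetD hSC /= subsetD.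
  case: (T \subset Y) => //=; case: (#|T| == p) => //=; rewrite ?andbT ?andbF //.
  by rewrite disjoint_sym; case: [disjoint T & S].
rewrite sumr_const cards_draws.
have hr : exists2 r, #|Y :\: S| = (p + r)%N & (r < p)%N.
  have h1 := cardsD Y S.
  have h2 : (#|Y :&: S| <= #|S|)%N by apply: subset_leq_card; apply: subsetIr.
  have h3 : (0 < p)%N by apply: prime_gt0.
  exists (#|Y :\: S| - p)%N; lia.
case: hr => r -> hr.
by rewrite binp_Fp.
Qed.

Lemma meval_split (F : fieldType) n (P : mpoly F n) (a : pred (F * monomial n)) z :
  meval P z = meval (filter a P) z + meval (filter (predC a) P) z.
Proof.
elim: P => [|t P IH]; first by rewrite /meval !big_nil addr0.
rewrite /= /meval big_cons; case: (a t) => /=; rewrite ?big_cons -/(meval _ z) -/(meval _ z) IH.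
  by rewrite addrA.
by rewrite addrCA.
Qed.

Theorem mainTheorem11 (p : nat) (hp : prime p) (C : {set 'I_(4 * p)})
  (hC : #|C| = (3 * p)%N) (y : monomial (4 * p)) :
  let V : {set {ffun 'I_(4 * p) -> 'F_p}} :=
    [set charvec 'F_p A | A : {set 'I_(4 * p)} & #|A| == (2 * p)%N] in
  let Q : {set {ffun 'I_(4 * p) -> 'F_p}} := charvec 'F_p C |: V in
  Sm_deglex Q y -> ~ Sm_deglex V y -> (p <= mdeg y)%N.
Proof.
move=> V Q hSmQ hnSmV.
rewrite leqNgt; apply/negP => hlt.
apply: hnSmV => -[P [hlead hvan]]; apply: hSmQ; exists P; split => //.
move=> x; rewrite in_setU1 => /orP [/eqP -> | hx]; last exact: hvan.
have hdeg m : coef P m != 0 -> (mdeg m < p)%N.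
  move=> /hlead.2 [->|] //; rewrite /deglex_lt => /orP [h|/andP [/eqP -> _]] //.
  exact: ltn_trans h hlt.
set Plo := [seq t <- P | (mdeg t.2 < p)%N].
have hsplit z : meval P z = meval Plo z.
  have hhi : meval [seq t <- P | ~~ (mdeg t.2 < p)%N] z = 0.
    apply: coef0_meval => m; rewrite /coef big_filter_cond.
    case: (boolP (mdeg m < p)%N) => hm.
      apply: big_pred0 => t /=; case Htm: (_ == _); last by rewrite andbF.
      by rewrite (eqP Htm) hm.
    have hc : coef P m = 0.
      by apply/eqP; apply: contraNT hm => /hdeg.
    rewrite -[RHS]hc /coef; apply: eq_bigl => t.
    case Htm: (_ == _); last by rewrite andbF.
    by rewrite (eqP Htm) hm.
  by rewrite (meval_split P (fun t => (mdeg t.2 < p)%N)) hhi addr0.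
have [Y hYC hY] : exists2 Y : {set 'I_(4 * p)}, Y \subset C & #|Y| = (p + p.-1)%N.
  have : (0 < #|[set A : {set 'I_(4 * p)} | A \subset C & #|A| == (p + p.-1)%N]|)%N.
    by rewrite cards_draws bin_gt0 hC; lia.
  by case/card_gt0P => Y; rewrite inE => /andP [h1 /eqP h2]; exists Y.
pose D := [set T : {set 'I_(4 * p)} | T \subset Y & #|T| == p].
have hT T : T \in D -> charvec 'F_p (C :\: T) \in V.
  rewrite inE => /andP [hTY /eqP hTp].
  apply: imset_f; rewrite inE cardsD (setIidPr (subset_trans hTY hYC)) hC hTp.
  apply/eqP; lia.
rewrite hsplit.
transitivity (\sum_(T in D) meval Plo (charvec 'F_p (C :\: T))); last first.
  by rewrite big1 // => T /hT /hvan; rewrite hsplit.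
rewrite /meval exchange_big /= big_filter big_filter.
apply: eq_bigr => t ht.
rewrite -mulr_sumr; congr (_ * _).
rewrite (mono_charvec 'F_p t.2 C).
rewrite -(count_id hp hYC hY (leq_ltn_trans (card_supp t.2) ht)).
by apply: eq_bigr => T _; rewrite (mono_charvec 'F_p t.2 (C :\: T)).
Qed.
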